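(* For all integers $k$ and $M$, the series below converges absolutely and $$\sum_{n=-\infty}^{M} q^{2n}\cos_q\!\big(q^{2(k+n)}\big)=q^{-2k}\sin_q\!\big(q^{2(k+M)}\big).$$ Equivalently, with $\Theta(q^{2n}-q^{2M})=1$ for $n\le M$ and $0$ for $n>M$, one has $N_q\sum_{n\in\mathbb{Z}}q^{2n}\cos_q(q^{2(k+n)})\Theta(q^{2n}-q^{2M})=N_q\,q^{-2k}\sin_q(q^{2(k+M)})$ for any constant $N_q$.
   Context: Fix a real number $q>1$ and let $(q^{-2};q^{-2})_n=\prod_{j=1}^n(1-q^{-2j})$. Define $\sin_q(z)=\sum_{n\ge0}(-1)^nq^{-2n(n+1)}\frac{z^{2n+1}}{(q^{-2};q^{-2})_{2n+1}}$ and $\cos_q(z)=\sum_{n\ge0}(-1)^nq^{-2n(n+1)}\frac{z^{2n}}{(q^{-2};q^{-2})_{2n}}$. *)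

(* Defs.v *)
From Stdlib Require Import Reals ZArith.
From Coquelicot Require Import Coquelicot.
Open Scope R_scope.

Fixpoint qpoch (a : R) (n : nat) : R :=
  match n with
  | O => 1
  | S m => qpoch a m * (1 - a ^ (S m))
  end.

Definition sin_q (q z : R) : R :=
  Series (fun n : nat => (-1) ^ n * (/ q) ^ (2 * n * (n + 1))
                         * z ^ (2 * n + 1) / qpoch (/ q ^ 2) (2 * n + 1)).

Definition cos_q (q z : R) : R :=
  Series (fun n : nat => (-1) ^ n * (/ q) ^ (2 * n * (n + 1))
                         * z ^ (2 * n) / qpoch (/ q ^ 2) (2 * n)).

(* The term q^{2n} cos_q(q^{2(k+n)}) of the sum over n <= M, reindexed by
   n = M - j with j : nat. *)
Definition lhs_term (q : R) (k M : Z) (j : nat) : R :=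
  let n := (M - Z.of_nat j)%Z in
  powerRZ q (2 * n) * cos_q q (powerRZ q (2 * (k + n))).

(* Main.v *)
Require Import Defs.
From Stdlib Require Import Reals ZArith Lia Lra.
From Coquelicot Require Import Coquelicot.
Open Scope R_scope.

Lemma pZ (q : R) (a : Z) (j : nat) : 0 < q ->
  powerRZ q (2 * (a - Z.of_nat j)) = powerRZ q (2 * a) * (/ q ^ 2) ^ j.
Proof.
  intros hq.
  replace (2 * (a - Z.of_nat j))%Z with (2 * a + - Z.of_nat (2 * j))%Z by lia.
  rewrite powerRZ_add by lra. rewrite powerRZ_neg', <- pow_powerRZ.
  f_equal. rewrite pow_inv, pow_mult. reflexivity.
Qed.

Lemma pow_le1 (p : R) (n : nat) : 0 <= p <= 1 -> 0 <= p ^ n <= 1.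
Proof. intros hp; induction n; simpl; nra. Qed.

Lemma pow_le_p (p : R) (n : nat) : 0 <= p <= 1 -> p ^ (S n) <= p.
Proof. intros hp; simpl; pose proof (pow_le1 p n hp); nra. Qed.

Lemma qpochS (a : R) (m : nat) : qpoch a (S m) = qpoch a m * (1 - a ^ (S m)).
Proof. reflexivity. Qed.

Lemma qpoch_lb (p : R) (m : nat) : 0 < p < 1 -> 0 < (1 - p) ^ m <= qpoch p m.
Proof.
  intros hp. induction m as [|m IH]. simpl; lra.
  rewrite qpochS. pose proof (pow_le_p p m ltac:(lra)). pose proof (pow_le1 p (S m) ltac:(lra)).
  change ((1 - p) ^ S m) with ((1 - p) * (1 - p) ^ m). split. apply Rmult_lt_0_compat; lra.
  rewrite Rmult_comm. apply Rmult_le_compat; lra.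
Qed.

Definition cterm (q y : R) (n : nat) : R :=
  (-1) ^ n * (/ q) ^ (2 * n * (n + 1)) * y ^ (2 * n) / qpoch (/ q ^ 2) (2 * n).

Lemma geomlim (p c : R) : 0 <= p < 1 -> is_lim_seq (fun J => c * p ^ (S J)) 0.
Proof.
  intros hp.
  apply is_lim_seq_ext with (fun J => (c * p) * p ^ J).
  { intros; simpl; ring. }
  replace (Finite 0) with (Rbar_mult (c * p) 0) by (simpl; f_equal; ring).
  apply is_lim_seq_scal_l, is_lim_seq_geom. rewrite Rabs_pos_eq; lra.
Qed.

Lemma cterm_abs (q y : R) : 1 < q -> ex_series (fun n => Rabs (cterm q y n)).
Proof.
  intros hq.
  set (p := / q ^ 2).
  assert (hp : 0 < p < 1).
  { unfold p. split. apply Rinv_0_lt_compat; nra.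
    rewrite <- Rinv_1. apply Rinv_lt_contravar; nra. }
  assert (hw : 0 < / q < 1).
  { split. apply Rinv_0_lt_compat; nra. rewrite <- Rinv_1. apply Rinv_lt_contravar; nra. }
  set (C := (y ^ 2 + 1) * / (1 - p) ^ 2).
  assert (hC : 0 < C).
  { unfold C. apply Rmult_lt_0_compat. nra. apply Rinv_0_lt_compat. nra. }
  set (a := fun n : nat => (/ q) ^ (2 * n * (n + 1)) * C ^ n).
  assert (ha : forall n, 0 < a n).
  { intros n; unfold a. apply Rmult_lt_0_compat; apply pow_lt; lra. }
  assert (haS : forall n, a (S n) = a n * (C * (/ q) ^ 4 * ((/ q) ^ 4) ^ n)).
  { intros n; unfold a.
    replace (2 * S n * (S n + 1))%nat with (2 * n * (n + 1) + 4 * S n)%nat by nia.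
    replace (4 * S n)%nat with (4 + 4 * n)%nat by nia.
    rewrite !pow_add, (pow_mult (/ q) 4 n). change (C ^ S n) with (C * C ^ n). ring. }
  assert (Ea : ex_series a).
  { apply ex_series_ext with (fun n => Rabs (a n)).
    { intros n; apply Rabs_pos_eq; left; apply ha. }
    apply ex_series_DAlembert with 0. lra.
    { intros n; pose proof (ha n); lra. }
    apply is_lim_seq_ext with (fun n => (C * (/ q) ^ 4) * ((/ q) ^ 4) ^ n).
    { intros n. rewrite haS.
      replace (a n * (C * (/ q) ^ 4 * ((/ q) ^ 4) ^ n) / a n) with (C * (/ q) ^ 4 * ((/ q) ^ 4) ^ n)
        by (field; pose proof (ha n); lra).
      rewrite Rabs_pos_eq. reflexivity.
      apply Rmult_le_pos. apply Rmult_le_pos; [lra| apply pow_le; lra]. apply pow_le; apply pow_le; lra. }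
    replace (Finite 0) with (Rbar_mult (C * (/ q) ^ 4) 0) by (simpl; f_equal; ring).
    apply is_lim_seq_scal_l, is_lim_seq_geom.
    pose proof (pow_le1 (/q) 4 ltac:(lra)).
    rewrite Rabs_pos_eq by lra.
    replace 4%nat with (S 3) by reflexivity. pose proof (pow_le_p (/q) 3 ltac:(lra)). lra. }
  apply (@ex_series_le R_AbsRing R_CompleteNormedModule) with a; [|exact Ea].
  intros n. change (norm (Rabs (cterm q y n))) with (Rabs (Rabs (cterm q y n))).
  rewrite Rabs_Rabsolu. unfold cterm, a. fold p.
  pose proof (qpoch_lb p (2 * n) hp) as [hQ1 hQ2].
  unfold Rdiv. rewrite !Rabs_mult, pow_1_abs, Rabs_inv.
  rewrite (Rabs_pos_eq ((/ q) ^ _)) by (apply pow_le; lra).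
  rewrite (Rabs_pos_eq (qpoch _ _)) by lra.
  rewrite (pow_mult y 2 n), (Rabs_pos_eq ((y ^ 2) ^ n)) by (apply pow_le; nra).
  unfold C. rewrite Rpow_mult_distr, (pow_inv ((1 - p) ^ 2)), <- (pow_mult (1 - p) 2 n).
  rewrite Rmult_1_l, !Rmult_assoc. apply Rmult_le_compat_l. apply pow_le; lra.
  apply Rmult_le_compat. apply pow_le; nra. left; apply Rinv_0_lt_compat; lra.
  apply pow_incr; nra.
  apply Rinv_le_contravar; lra.
Qed.

Theorem mainTheorem8 (q : R) (k M : Z) (hq : 1 < q) :
  ex_series (fun j : nat => Rabs (lhs_term q k M j)) /\
  is_series (lhs_term q k M)
    (powerRZ q (-2 * k) * sin_q q (powerRZ q (2 * (k + M)))).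
Proof.
  set (p := / q ^ 2).
  assert (hp : 0 < p < 1).
  { unfold p. split. apply Rinv_0_lt_compat; nra.
    rewrite <- Rinv_1. apply Rinv_lt_contravar; nra. }
  set (u := powerRZ q (2 * (k + M))).
  set (A := powerRZ q (2 * M)).
  set (K := powerRZ q (-2 * k)).
  assert (hAK : A = K * u).
  { unfold A, K, u. rewrite <- powerRZ_add by lra. f_equal. lia. }
  set (b := fun n : nat => A * cterm q u n).
  set (r := fun n : nat => p ^ (2 * n + 1)).
  assert (hr : forall n, 0 <= r n <= p).
  { intros n; unfold r. replace (2 * n + 1)%nat with (S (2 * n)) by lia.
    split. apply pow_le; lra. apply pow_le_p; lra. }
  assert (hr1 : forall n, 1 - r n <> 0). { intros n; pose proof (hr n); lra. }
  set (d := fun n : nat => b n / (1 - r n)).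
  set (F := fun j : nat => Series (fun n => b n * r n ^ j)).
  assert (hL : forall j, lhs_term q k M j = F j).
  { intros j. unfold lhs_term, F; cbv zeta.
    replace (k + (M - Z.of_nat j))%Z with ((k + M) - Z.of_nat j)%Z by lia.
    rewrite !pZ by lra. fold p u A.
    unfold cos_q. rewrite <- Series_scal_l. apply Series_ext. intros n.
    unfold b, r, cterm. fold p.
    replace ((p ^ (2 * n + 1)) ^ j) with (p ^ j * (p ^ j) ^ (2 * n))
      by (rewrite <- !pow_mult, <- pow_add; f_equal; nia).
    rewrite Rpow_mult_distr. field.
    pose proof (qpoch_lb p (2 * n) hp); lra. }
  assert (hT : K * sin_q q u = Series d).
  { unfold sin_q. rewrite <- Series_scal_l. apply Series_ext. intros n.
    unfold d, b, r, cterm. fold p.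
    replace (2 * n + 1)%nat with (S (2 * n)) by lia.
    rewrite qpochS, hAK. change (u ^ S (2 * n)) with (u * u ^ (2 * n)).
    pose proof (qpoch_lb p (2 * n) hp). pose proof (hr1 n) as H1. unfold r in H1.
    replace (2 * n + 1)%nat with (S (2 * n)) in H1 by lia.
    field. split; lra. }
  assert (Eb : ex_series (fun n => Rabs (b n))).
  { apply ex_series_ext with (fun n => Rabs (cterm q u n) * Rabs A).
    { intros n; unfold b. rewrite Rabs_mult; apply Rmult_comm. }
    apply ex_series_scal_r, cterm_abs; exact hq. }
  set (B := Series (fun n => Rabs (b n))).
  assert (Ed : ex_series (fun n => Rabs (d n))).
  { apply (@ex_series_le R_AbsRing R_CompleteNormedModule) with (fun n => Rabs (b n) * / (1 - p)).
    2: apply ex_series_scal_r, Eb.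
    intros n. change (norm (Rabs (d n))) with (Rabs (Rabs (d n))). rewrite Rabs_Rabsolu.
    unfold d, Rdiv. rewrite Rabs_mult, Rabs_inv, (Rabs_pos_eq (1 - r n)) by (pose proof (hr n); lra).
    apply Rmult_le_compat_l. apply Rabs_pos.
    apply Rinv_le_contravar. lra. pose proof (hr n); lra. }
  set (D := Series (fun n => Rabs (d n))).
  assert (EFj : forall j, ex_series (fun n => Rabs (b n * r n ^ j))).
  { intros j. apply (@ex_series_le R_AbsRing R_CompleteNormedModule) with (fun n => Rabs (b n)); [|exact Eb].
    intros n. change (norm (Rabs (b n * r n ^ j))) with (Rabs (Rabs (b n * r n ^ j))).
    rewrite Rabs_Rabsolu, Rabs_mult. rewrite <- (Rmult_1_r (Rabs (b n))) at 2.
    apply Rmult_le_compat_l. apply Rabs_pos.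
    pose proof (pow_le1 (r n) j ltac:(pose proof (hr n); lra)). rewrite Rabs_pos_eq; lra. }
  assert (IFj : forall j, is_series (fun n => b n * r n ^ j) (F j)).
  { intros j. apply Series_correct. apply ex_series_Rabs, EFj. }
  assert (BFj : forall j, Rabs (F j) <= B * p ^ j).
  { intros j. eapply Rle_trans. apply Series_Rabs, EFj.
    unfold B. rewrite <- Series_scal_r. apply Series_le.
    2: apply ex_series_scal_r, Eb.
    intros n. split. apply Rabs_pos. rewrite Rabs_mult.
    apply Rmult_le_compat_l. apply Rabs_pos.
    rewrite Rabs_pos_eq by (apply pow_le; pose proof (hr n); lra).
    apply pow_incr; apply hr. }
  split.
  { apply ex_series_ext with (fun j => Rabs (F j)). { intros j; rewrite hL; reflexivity. }
    apply (@ex_series_le R_AbsRing R_CompleteNormedModule) with (fun j => B * p ^ j).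
    { intros j. change (norm (Rabs (F j))) with (Rabs (Rabs (F j))). rewrite Rabs_Rabsolu. apply BFj. }
    apply ex_series_ext with (fun j => p ^ j * B). intros; apply Rmult_comm.
    apply ex_series_scal_r, ex_series_geom. rewrite Rabs_pos_eq; lra. }
  fold u K. rewrite hT.
  apply is_series_ext with F. { intros j; rewrite hL; reflexivity. }
  assert (PS : forall J, is_series (fun n => d n * (1 - r n ^ (S J))) (sum_n F J)).
  { induction J as [|J IH].
    - rewrite sum_O. apply is_series_ext with (fun n => b n * r n ^ 0); [|apply IFj].
      intros n. match goal with |- ?x = ?y => change (@eq R x y) end. unfold d. field. apply hr1.
    - rewrite sum_Sn. apply is_series_ext with
        (fun n => plus (d n * (1 - r n ^ S J)) (b n * r n ^ (S J))).
      2: apply (@is_series_plus R_AbsRing R_NormedModule); [exact IH | apply IFj].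
      intros n. match goal with |- ?x = ?y => change (@eq R x y) end. change (plus ?x ?y) with (x + y). unfold d.
      change (r n ^ S (S J)) with (r n * r n ^ S J). field. apply hr1. }
  assert (Edd : is_series d (Series d)) by (apply Series_correct, ex_series_Rabs, Ed).
  assert (Bnd : forall J, Rabs (Series d - sum_n F J) <= D * p ^ S J).
  { intros J.
    assert (HE : is_series (fun n => d n * r n ^ S J) (Series d - sum_n F J)).
    { apply is_series_ext with (fun n => plus (d n) (opp (d n * (1 - r n ^ S J)))).
      2: apply (@is_series_minus R_AbsRing R_NormedModule); [exact Edd | apply PS].
      intros n. match goal with |- ?x = ?y => change (@eq R x y) end. change (plus ?x (opp ?y)) with (x + - y). ring. }
    rewrite <- (is_series_unique _ _ HE).
    assert (Ea : ex_series (fun n => Rabs (d n * r n ^ S J))).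
    { apply (@ex_series_le R_AbsRing R_CompleteNormedModule) with (fun n => Rabs (d n)); [|exact Ed].
      intros n. change (norm (Rabs (d n * r n ^ S J))) with (Rabs (Rabs (d n * r n ^ S J))).
      rewrite Rabs_Rabsolu, Rabs_mult. rewrite <- (Rmult_1_r (Rabs (d n))) at 2.
      apply Rmult_le_compat_l. apply Rabs_pos.
      pose proof (pow_le1 (r n) (S J) ltac:(pose proof (hr n); lra)). rewrite Rabs_pos_eq; lra. }
    eapply Rle_trans. apply Series_Rabs, Ea.
    unfold D. rewrite <- Series_scal_r. apply Series_le.
    2: apply ex_series_scal_r, Ed.
    intros n. split. apply Rabs_pos. rewrite Rabs_mult.
    apply Rmult_le_compat_l. apply Rabs_pos.
    rewrite Rabs_pos_eq by (apply pow_le; pose proof (hr n); lra).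
    apply pow_incr; apply hr. }
  change (is_lim_seq (sum_n F) (Series d)).
  apply is_lim_seq_le_le with (fun J => Series d - D * p ^ S J) (fun J => Series d + D * p ^ S J).
  { intros J. specialize (Bnd J). unfold Rabs in Bnd. destruct Rcase_abs in Bnd; lra. }
  - pose proof (is_lim_seq_minus' _ _ _ _ (is_lim_seq_const (Series d)) (geomlim p D ltac:(lra))) as H0.
    rewrite Rminus_0_r in H0. exact H0.
  - pose proof (is_lim_seq_plus' _ _ _ _ (is_lim_seq_const (Series d)) (geomlim p D ltac:(lra))) as H0.
    rewrite Rplus_0_r in H0. exact H0.
Qed.
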